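(* Let $A\in\mathbb{R}^{m\times n}$ with $A\geq 0$ and $A^{\dagger}\geq 0$. Let $A=M-N=U-V$ be two proper regular splittings of $A$ such that $R(M+U-A)=R(A)$ and $N(M+U-A)=N(A)$. Then, with $H=U^{\dagger}VM^{\dagger}N$, $$\rho(H)\leq \min\{\rho(U^{\dagger}V),\rho(M^{\dagger}N)\}<1.$$
   Context: All matrices are real. $X^{\dagger}$ denotes the Moore–Penrose inverse of $X$, and $\rho(\cdot)$ the spectral radius. For a matrix $X$, $X\geq 0$ means that all entries of $X$ are nonnegative and at least one entry is positive; $X\geq Y$ means $X-Y\geq 0$. $R(X)$ and $N(X)$ denote range and null space. A splitting $A=U-V$ is proper if $R(U)=R(A)$ and $N(U)=N(A)$; it is a proper regular splitting if it is proper, $U^{\dagger}\geq 0$ and $V\geq 0$. A matrix $A$ is semi-monotone if $A^{\dagger}\geq 0$. *)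

(* Defs.v *)
From mathcomp Require Import all_boot all_order all_algebra.
From mathcomp Require Import reals.
From mathcomp Require Import complex.
Set Implicit Arguments. Unset Strict Implicit. Unset Printing Implicit Defensive.
Import Order.TTheory GRing.Theory Num.Theory.
Local Open Scope ring_scope.

Definition mx_nonneg (R : realType) m n (X : 'M[R]_(m, n)) : Prop :=
  (forall i j, 0 <= X i j) /\ (exists i j, 0 < X i j).

Definition mx_ge (R : realType) m n (X Y : 'M[R]_(m, n)) : Prop :=
  mx_nonneg (X - Y).

(* X is the Moore--Penrose inverse of A (the four Penrose equations;
   for real matrices the adjoint is the transpose). *)
Definition is_MP_inverse (R : realType) m n (A : 'M[R]_(m, n)) (X : 'M[R]_(n, m)) : Prop :=
  [/\ A *m X *m A = A, X *m A *m X = X,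
      (A *m X)^T = A *m X & (X *m A)^T = X *m A].

Definition mx_range (R : realType) m n (X : 'M[R]_(m, n)) : 'cV[R]_m -> Prop :=
  fun x => exists y : 'cV[R]_n, x = X *m y.
Definition mx_null (R : realType) m n (X : 'M[R]_(m, n)) : 'cV[R]_n -> Prop :=
  fun x => X *m x = 0.

Definition proper_splitting (R : realType) m n (A U V : 'M[R]_(m, n)) : Prop :=
  [/\ A = U - V,
      (forall x, mx_range U x <-> mx_range A x) &
      (forall x, mx_null U x <-> mx_null A x)].

Definition proper_regular_splitting (R : realType) m n
    (A U V : 'M[R]_(m, n)) (Ud : 'M[R]_(n, m)) : Prop :=
  [/\ proper_splitting A U V, is_MP_inverse U Ud, mx_nonneg Ud & mx_nonneg V].

(* Spectral radius: the largest modulus of a (complex) eigenvalue, i.e. of a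
   root of the characteristic polynomial of A viewed over R[i]. *)
Definition spectral_radius (R : realType) n (A : 'M[R]_n) : R :=
  \big[Num.max/0]_(z <- sval (closed_field_poly_normal
        (char_poly (map_mx (real_complex R) A))))
    ComplexField.Normc.normc z.

(* Main.v *)
Require Import Defs.
From mathcomp Require Import all_boot all_order all_algebra.
From mathcomp Require Import reals complex.
Import Order.TTheory GRing.Theory Num.Theory.
Local Open Scope ring_scope.
Set Implicit Arguments. Unset Strict Implicit. Unset Printing Implicit Defensive.

Section Spec.
Variable R : realType.
Local Notation nc := (@ComplexField.Normc.normc R).

Lemma sr_ge_root n (X : 'M[R]_n) z :
  root (char_poly (map_mx (real_complex R) X)) z ->
  nc z <= spectral_radius X.
Proof.
rewrite /spectral_radius.
case: closed_field_poly_normal => r /= Hr.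
rewrite Hr (monicP (char_poly_monic _)) scale1r root_prod_XsubC => zr.
by apply: le_bigmax_seq.
Qed.

Lemma sr_ge0 n (X : 'M[R]_n) : 0 <= spectral_radius X.
Proof. by rewrite /spectral_radius bigmax_ge_id. Qed.

Lemma sr_le n (X : 'M[R]_n) c :
  0 <= c -> (forall z, root (char_poly (map_mx (real_complex R) X)) z ->
     nc z <= c) -> spectral_radius X <= c.
Proof.
move=> c0 H; rewrite /spectral_radius.
case: closed_field_poly_normal => r /= Hr.
rewrite big_seq_cond; apply: bigmax_le => // z /andP[zr _]; apply: H.
by rewrite Hr (monicP (char_poly_monic _)) scale1r root_prod_XsubC.
Qed.

Lemma sr_lt n (X : 'M[R]_n) c :
  0 < c -> (forall z, root (char_poly (map_mx (real_complex R) X)) z ->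
     nc z < c) -> spectral_radius X < c.
Proof.
move=> c0 H; rewrite /spectral_radius.
case: closed_field_poly_normal => r /= Hr.
rewrite big_seq_cond; apply: bigmax_lt => // z /andP[zr _]; apply: H.
by rewrite Hr (monicP (char_poly_monic _)) scale1r root_prod_XsubC.
Qed.

Lemma nc_real (a : R) : nc (real_complex R a) = `|a|.
Proof. by rewrite /ComplexField.Normc.normc /= expr0n /= addr0 sqrtr_sqr. Qed.


End Spec.
Section Eig.
Variables (F : fieldType) (n : nat) (E : 'M[F]_n).
Hypothesis hEE : E *m E = E.

Lemma rV_nz (x : 'rV[F]_n) : x != 0 -> exists j, x 0 j != 0.
Proof.
move=> xn; case: (pickP (fun j => x 0 j != 0)) => [j Hj|H]; first by exists j.
case/eqP: xn; apply/matrixP => i j; rewrite ord1 mxE.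
by move: (H j) => /= /negbFE/eqP.
Qed.

Lemma eig_single (a : 'rV[F]_n) z (x : 'rV[F]_n) :
  diag_mx a *m E = E *m diag_mx a ->
  x != 0 -> z != 0 -> x *m (E *m diag_mx a) = z *: x ->
  exists j, (exists i, E i j != 0) /\ z = a 0 j.
Proof.
move=> hc xn zn hx.
have xE : x *m E = x.
  apply: (scalerI zn); by rewrite scalemxAl -hx -!mulmxA hc (mulmxA E) hEE hx.
have [j xj] := rV_nz xn.
exists j; split.
  case: (pickP (fun i => E i j != 0)) => [i Hi|H]; first by exists i.
  move: xj; rewrite -xE mxE big1 ?eqxx // => i _.
  by move: (H i) => /= /negbFE/eqP ->; rewrite mulr0.
apply: (mulIf xj).
have := congr1 (fun M : 'rV[F]_n => M 0 j) hx.
by rewrite mulmxA xE mul_mx_diag !mxE => <-; rewrite mulrC.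
Qed.

Lemma diag_mul (a b : 'rV[F]_n) :
  diag_mx a *m diag_mx b = diag_mx (\row_j (a 0 j * b 0 j)).
Proof.
apply/matrixP => i k; rewrite mul_diag_mx !mxE.
by case: (i == k); rewrite ?mulr1n ?mulr0n ?mulr0.
Qed.

Lemma eig_prod (a b : 'rV[F]_n) z (x : 'rV[F]_n) :
  diag_mx a *m E = E *m diag_mx a ->
  diag_mx b *m E = E *m diag_mx b ->
  x != 0 -> z != 0 -> x *m (E *m diag_mx a *m (E *m diag_mx b)) = z *: x ->
  exists j, (exists i, E i j != 0) /\ z = a 0 j * b 0 j.
Proof.
move=> ha hb xn zn hx.
have K : E *m diag_mx a *m (E *m diag_mx b) =
   E *m diag_mx (\row_j (a 0 j * b 0 j)).
  by rewrite -mulmxA (mulmxA (diag_mx a)) ha -!mulmxA diag_mul (mulmxA E) hEE.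
have hc : diag_mx (\row_j (a 0 j * b 0 j)) *m E = E *m diag_mx (\row_j (a 0 j * b 0 j)).
  by rewrite -diag_mul -mulmxA hb !mulmxA ha.
rewrite K in hx.
have [j [Hj ->]] := eig_single hc xn zn hx.
by exists j; split => //; rewrite mxE.
Qed.

Lemma eig_col (a : 'rV[F]_n) j :
  E^T = E -> diag_mx a *m E = E *m diag_mx a ->
  (exists i, E i j != 0) -> eigenvalue (E *m diag_mx a) (a 0 j).
Proof.
move=> hT hc [i Hi]; apply/eigenvalueP; exists (row j E).
  rewrite -row_mul mulmxA hEE -hc row_mul row_diag_mx -scalemxAl -rowE //.
apply/eqP => /matrixP /(_ 0 i); rewrite !mxE => H.
by move: Hi; rewrite -hT mxE H eqxx.
Qed.

End Eig.
Lemma col_mul' (R : pzRingType) m n p (A : 'M[R]_(m, n)) (B : 'M_(n, p)) j :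
  col j (A *m B) = A *m col j B.
Proof. by rewrite !colE mulmxA. Qed.

Section Struct.
Variables (R : realType) (n : nat) (E : 'M[R]_n).
Hypothesis hE0 : forall i j, 0 <= E i j.
Hypothesis hET : E^T = E.
Hypothesis hEE : E *m E = E.

Lemma Esym i j : E i j = E j i.
Proof. by rewrite -{1}hET mxE. Qed.

Lemma Etrans l k j : 0 < E l k -> 0 < E k j -> 0 < E l j.
Proof.
move=> h1 h2; rewrite -hEE mxE (bigD1 k) //=.
apply: (lt_le_trans (mulr_gt0 h1 h2)); rewrite lerDl.
by apply: sumr_ge0 => m _; apply: mulr_ge0.
Qed.

Lemma prop_col j (w : 'cV[R]_n) : (forall i, 0 <= w i 0) -> E *m w = w ->
  (forall i, E i j = 0 -> w i 0 = 0) -> exists t, w = t *: col j E.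
Proof.
move=> w0 Ew wS.
have E0 : forall i, ~~ (0 < E i j) -> E i j = 0.
  by move=> i; rewrite lt_def hE0 andbT negbK => /eqP.
case: (pickP (fun i => 0 < E i j)) => [i0 Hi0 | H]; last first.
  exists 0; apply/matrixP => i k; rewrite ord1 !mxE mul0r.
  by apply: wS; apply: E0; rewrite H.
pose F := fun l => w l 0 / E l j.
case: (@arg_minP _ _ _ i0 (fun l => 0 < E l j) F Hi0) => l0 Pl0 Hmin.
exists (F l0).
set u := w - F l0 *: col j E.
have u0 : forall i, 0 <= u i 0.
  move=> i; rewrite !mxE subr_ge0.
  case: (boolP (0 < E i j)) => Pi.
    by have := Hmin i Pi; rewrite /F ler_pdivlMr.
  by rewrite E0 // mulr0 w0.
have Eu : E *m u = u.
  by rewrite mulmxBr -scalemxAr -col_mul' hEE Ew.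
have ul0 : u l0 0 = 0.
  rewrite !mxE /F divfK ?subrr //; exact: lt0r_neq0.
have uE : forall i, u i 0 = w i 0 - F l0 * E i j by move=> i; rewrite !mxE.
have uw : w = u + F l0 *: col j E by rewrite /u addrNK.
clearbody u.
have := congr1 (fun M : 'cV[R]_n => M l0 0) Eu.
rewrite [in X in X = _]mxE => S0; have {S0} S0 := etrans S0 ul0.
have T0 := @psumr_eq0P _ _ xpredT (fun m => E l0 m * u m 0) (fun m _ => mulr_ge0 (hE0 l0 m) (u0 m)) S0.
suff u00 : u = 0 by rewrite uw u00 add0r.
apply/matrixP => i k; rewrite ord1 [RHS]mxE.
case: (boolP (0 < E i j)) => Pi.
  have Pl : 0 < E l0 i by apply: (Etrans Pl0); rewrite (Esym j i).
  by have /eqP := T0 i isT; rewrite mulf_eq0 (gt_eqF Pl) /= => /eqP.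
by rewrite uE (wS i (E0 _ Pi)) (E0 _ Pi) mulr0 subrr.
Qed.


Lemma Q_struct (Q : 'M[R]_n) :
  (forall i j, 0 <= Q i j) -> (forall i j, Q i j <= E i j) ->
  E *m Q = Q -> Q *m E = Q ->
  (forall j, (exists i, E i j != 0) -> exists i, Q i j != 0) ->
  exists g : 'rV[R]_n, [/\ Q = E *m diag_mx g,
     diag_mx g *m E = E *m diag_mx g &
     forall j, (exists i, E i j != 0) -> 0 < g 0 j <= 1].
Proof.
move=> Q0 QE EQ QE' Qnz.
have : forall j, exists t : R, col j Q = t *: col j E.
  move=> j; apply: prop_col.
  - by move=> i; rewrite mxE.
  - by rewrite -col_mul' EQ.
  - by move=> i Eij; rewrite mxE; apply/le_anti; rewrite Q0 -Eij QE.
case/fin_all_exists => f Hf.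
have Qf : forall i j, Q i j = f j * E i j.
  by move=> i j; have := congr1 (fun M : 'cV[R]_n => M i 0) (Hf j); rewrite !mxE.
exists (\row_j f j); split.
- by apply/matrixP => i j; rewrite mul_mx_diag !mxE Qf mulrC.
- apply/matrixP => i k; rewrite mul_mx_diag mul_diag_mx !mxE.
  case: (boolP (0 < E i k)) => Pik; last first.
    have -> : E i k = 0 by apply/eqP; rewrite eq_le hE0 andbT leNgt.
    by rewrite mulr0 mul0r.
  rewrite [LHS]mulrC; congr (_ * _).
  have [s Hs] : exists s, col i E = s *: col k E.
    apply: prop_col.
    - by move=> l; rewrite mxE.
    - by rewrite -col_mul' hEE.
    move=> l Elk; rewrite mxE; apply/eqP; apply: contraT => Eli.
    have Pli : 0 < E l i by rewrite lt_def Eli hE0.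
    by move: (Etrans Pli Pik); rewrite Elk ltxx.
  have Eki : E k i != 0 by rewrite (Esym k i) gt_eqF.
  have e1 : Q *m col i E = f i *: col i E by rewrite -col_mul' QE' Hf.
  have e2 : Q *m col i E = f k *: col i E.
    by rewrite Hs -scalemxAr -col_mul' QE' Hf scalerA mulrC -scalerA.
  have := congr1 (fun M : 'cV[R]_n => M k 0) (etrans (esym e1) e2).
  by rewrite !mxE => /(mulIf Eki).
- move=> j [i0 Ei0]; rewrite mxE.
  have P0 : 0 < E i0 j by rewrite lt_def Ei0 hE0.
  apply/andP; split.
    rewrite lt_def; apply/andP; split.
      case: (Qnz j) => [|i Qi]; first by exists i0.
      by apply: contraNneq Qi => f0; rewrite Qf f0 mul0r.
    by rewrite -(pmulr_lge0 _ P0) -Qf Q0.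
  by rewrite -(ler_pM2r P0) mul1r -Qf QE.
Qed.

End Struct.

Section Final.
Variable R : realType.
Local Notation nc := (@ComplexField.Normc.normc R).
Local Notation phi := (real_complex R).

Lemma final n (E : 'M[R]_n) (d1 d2 : 'rV[R]_n) :
  E^T = E -> E *m E = E ->
  diag_mx d1 *m E = E *m diag_mx d1 -> diag_mx d2 *m E = E *m diag_mx d2 ->
  (forall j, (exists i, E i j != 0) -> 0 <= d1 0 j < 1) ->
  (forall j, (exists i, E i j != 0) -> 0 <= d2 0 j < 1) ->
  spectral_radius (E *m diag_mx d1 *m (E *m diag_mx d2)) <=
    Num.min (spectral_radius (E *m diag_mx d1)) (spectral_radius (E *m diag_mx d2))
  /\ Num.min (spectral_radius (E *m diag_mx d1)) (spectral_radius (E *m diag_mx d2)) < 1.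
Proof.
move=> hT hEE h1 h2 b1 b2.
set Ec := map_mx phi E.
have hEEc : Ec *m Ec = Ec by rewrite -map_mxM hEE.
have hTc : Ec^T = Ec by rewrite map_trmx hT.
have h1c : diag_mx (map_mx phi d1) *m Ec = Ec *m diag_mx (map_mx phi d1).
  by rewrite -map_diag_mx -!map_mxM h1.
have h2c : diag_mx (map_mx phi d2) *m Ec = Ec *m diag_mx (map_mx phi d2).
  by rewrite -map_diag_mx -!map_mxM h2.
have Enz : forall i j, Ec i j != 0 -> E i j != 0.
  by move=> i j; rewrite mxE; apply: contraNneq => ->; rewrite rmorph0.
have M1 : map_mx phi (E *m diag_mx d1) = Ec *m diag_mx (map_mx phi d1).
  by rewrite map_mxM map_diag_mx.
have M2 : map_mx phi (E *m diag_mx d2) = Ec *m diag_mx (map_mx phi d2).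
  by rewrite map_mxM map_diag_mx.
have MH : map_mx phi (E *m diag_mx d1 *m (E *m diag_mx d2)) =
    Ec *m diag_mx (map_mx phi d1) *m (Ec *m diag_mx (map_mx phi d2)).
  by rewrite map_mxM M1 M2.
have ev : forall (d : 'rV[R]_n) (hc : diag_mx (map_mx phi d) *m Ec = Ec *m diag_mx (map_mx phi d)) j,
    (exists i, Ec i j != 0) ->
    nc (phi (d 0 j)) <= spectral_radius (E *m diag_mx d).
  move=> d hc j hj; apply: sr_ge_root.
  rewrite map_mxM map_diag_mx -eigenvalue_root_char.
  have := eig_col hEEc hTc hc hj; by rewrite mxE.
have rhoH : forall z, root (char_poly (map_mx phi (E *m diag_mx d1 *m (E *m diag_mx d2)))) z ->
   nc z <= spectral_radius (E *m diag_mx d1) /\ nc z <= spectral_radius (E *m diag_mx d2).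
  move=> z; rewrite -eigenvalue_root_char MH => /eigenvalueP [x hx xn].
  have [->|zn] := eqVneq z 0.
    by rewrite ComplexField.Normc.normc0 !sr_ge0.
  have [j [[i hij] ez]] := eig_prod hEEc h1c h2c xn zn hx.
  have Eij : exists i, E i j != 0 by exists i; apply: Enz.
  have [/andP[p1 q1] /andP[p2 q2]] := (b1 j Eij, b2 j Eij).
  have ej : exists i, Ec i j != 0 by exists i.
  rewrite ez !mxE ComplexField.Normc.normcM !nc_real; split.
    apply: le_trans (ev _ h1c j ej); rewrite nc_real.
    by apply: ler_piMr; rewrite ?normr_ge0 // ger0_norm // ltW.
  apply: le_trans (ev _ h2c j ej); rewrite nc_real.
  by apply: ler_piMl; rewrite ?normr_ge0 // ger0_norm // ltW.
split.
  rewrite le_min; apply/andP; split; apply: sr_le; rewrite ?sr_ge0 // => z /rhoH []//.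
rewrite gt_min; apply/orP; left.
apply: sr_lt => // z; rewrite -eigenvalue_root_char M1 => /eigenvalueP [x hx xn].
have [->|zn] := eqVneq z 0; first by rewrite ComplexField.Normc.normc0.
have [j [[i hij] ez]] := eig_single hEEc h1c xn zn hx.
have Eij : exists i, E i j != 0 by exists i; apply: Enz.
have /andP[p1 q1] := b1 j Eij.
by rewrite ez mxE nc_real ger0_norm.
Qed.
End Final.
Section Main.
Variable R : realType.

Lemma mx_eq_cols n p (M1 M2 : 'M[R]_(n,p)) : (forall j, col j M1 = col j M2) -> M1 = M2.
Proof.
move=> H; apply/matrixP => i j.
by have := congr1 (fun M : 'cV[R]_n => M i 0) (H j); rewrite !mxE.
Qed.

Lemma proj_le n (P Q : 'M[R]_n) : Q *m Q = Q ->
  (forall x : 'cV_n, Q *m x = 0 -> P *m x = 0) -> P = P *m Q.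
Proof.
move=> hQ H; apply/eqP; rewrite -subr_eq0 -{1}(mulmx1 P) -mulmxBr; apply/eqP.
apply: mx_eq_cols => j; rewrite col_mul' col0; apply: H.
by rewrite -col_mul' mulmxBr mulmx1 hQ subrr col0.
Qed.

Lemma proj_eq n (P1 P2 : 'M[R]_n) : P1^T = P1 -> P1 *m P1 = P1 ->
  P2^T = P2 -> P2 *m P2 = P2 ->
  (forall x : 'cV_n, P1 *m x = 0 <-> P2 *m x = 0) -> P1 = P2.
Proof.
move=> s1 i1 s2 i2 H.
have e1 := proj_le i2 (fun x => proj2 (H x)).
have e2 := proj_le i1 (fun x => proj1 (H x)).
by rewrite -s1 e1 trmx_mul s1 s2 -e2.
Qed.

Lemma MP_proj m n (A : 'M[R]_(m, n)) Ad : is_MP_inverse A Ad ->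
  (Ad *m A)^T = Ad *m A /\ Ad *m A *m (Ad *m A) = Ad *m A.
Proof. by case=> h1 h2 h3 h4; split => //; rewrite mulmxA h2. Qed.

Lemma proper_E m n (A X Y : 'M[R]_(m, n)) Ad Xd :
  is_MP_inverse A Ad -> proper_splitting A X Y -> is_MP_inverse X Xd ->
  Xd *m X = Ad *m A.
Proof.
move=> hA [_ _ hN] hX.
have [sA iA] := MP_proj hA; have [sX iX] := MP_proj hX.
case: hA => a1 _ _ _; case: hX => x1 _ _ _.
apply: proj_eq => // x; split => H.
- have : X *m x = 0.
    by rewrite -[X in X *m x]x1 -!mulmxA (mulmxA Xd) H mulmx0.
  by move/hN; rewrite /mx_null => Ax; rewrite -mulmxA Ax mulmx0.
- have : A *m x = 0.
    by rewrite -[A in A *m x]a1 -!mulmxA (mulmxA Ad) H mulmx0.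
  by move/hN; rewrite /mx_null => Xx; rewrite -mulmxA Xx mulmx0.
Qed.

Lemma split_d m n (A X Y : 'M[R]_(m, n)) Ad Xd :
  (forall i j, 0 <= A i j) -> is_MP_inverse A Ad -> (forall i j, 0 <= Ad i j) ->
  proper_regular_splitting A X Y Xd ->
  exists d : 'rV[R]_n, [/\ Xd *m Y = Ad *m A *m diag_mx d,
     diag_mx d *m (Ad *m A) = Ad *m A *m diag_mx d &
     forall j, (exists i, (Ad *m A) i j != 0) -> 0 <= d 0 j < 1].
Proof.
move=> A0 hA Ad0 [hS hX [Xd0 _] [Y0 _]].
have [sE iE] := MP_proj hA.
set E := Ad *m A in sE iE *.
have XdX : Xd *m X = E := proper_E hA hS hX.
case: hS => eA hR _.
have eY : Y = X - A by rewrite eA opprB addrC subrK.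
have E0 : forall i j, 0 <= E i j.
  by move=> i j; rewrite mxE; apply: sumr_ge0 => k _; apply: mulr_ge0.
set Q := Xd *m A.
have Q0 : forall i j, 0 <= Q i j.
  by move=> i j; rewrite mxE; apply: sumr_ge0 => k _; apply: mulr_ge0.
have EQY : E - Q = Xd *m Y by rewrite eY mulmxBr XdX.
have QE : forall i j, Q i j <= E i j.
  move=> i j; rewrite -subr_ge0.
  have := congr1 (fun M : 'M[R]_n => M i j) EQY; rewrite !mxE => ->.
  by apply: sumr_ge0 => k _; apply: mulr_ge0.
case: (hX) => x1 x2 _ _; case: (hA) => a1 _ _ _.
have EQ : E *m Q = Q by rewrite -XdX /Q mulmxA x2.
have QE' : Q *m E = Q by rewrite /Q /E -mulmxA (mulmxA A) a1.
have XXdA : X *m Xd *m A = A.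
  apply: mx_eq_cols => j; rewrite col_mul'.
  have [y ->] : mx_range X (col j A).
    by apply/hR; exists (delta_mx j 0); rewrite -colE.
  by rewrite mulmxA x1.
have PQ : Ad *m X *m Q = E by rewrite /Q -!mulmxA (mulmxA X) XXdA.
clearbody E Q.
have Qnz : forall j, (exists i, E i j != 0) -> exists i, Q i j != 0.
  move=> j [i Eij]; case: (pickP (fun i => Q i j != 0)) => [k Hk|H]; first by exists k.
  have cQ : col j Q = 0.
    by apply/matrixP => k l; move: (H k) => /= /negbFE/eqP; rewrite !mxE => ->.
  have := congr1 (fun M : 'cV[R]_n => M i 0) (col_mul' (Ad *m X) Q j).
  rewrite cQ mulmx0 PQ !mxE => Eij0.
  by move: Eij; rewrite Eij0 eqxx.
have [g [Qg gc gb]] := Q_struct E0 sE iE Q0 QE EQ QE' Qnz.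
have gcE : forall i j, g 0 i * E i j = E i j * g 0 j.
  move=> i j; have := congr1 (fun M : 'M[R]_n => M i j) gc.
  by rewrite mul_diag_mx mul_mx_diag !mxE.
exists (\row_j (1 - g 0 j)); split.
- rewrite -EQY Qg; apply/matrixP => i j.
  by rewrite !mul_mx_diag !mxE mulrBr mulr1.
- apply/matrixP => i j; rewrite mul_diag_mx mul_mx_diag !mxE.
  by rewrite mulrBl mulrBr mul1r mulr1 gcE.
- move=> j /gb /andP[g0 g1]; rewrite mxE subr_ge0 g1 /=.
  by rewrite ltrBlDr ltrDl.
Qed.

End Main.

Unset Implicit Arguments.
Theorem theorem4p5 (R : realType) (m n : nat)
    (A M N U V : 'M[R]_(m, n)) (Ad Md Ud : 'M[R]_(n, m)) :
  mx_nonneg A ->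
  is_MP_inverse A Ad -> mx_nonneg Ad ->
  proper_regular_splitting A M N Md ->
  proper_regular_splitting A U V Ud ->
  (forall x, mx_range (M + U - A) x <-> mx_range A x) ->
  (forall x, mx_null (M + U - A) x <-> mx_null A x) ->
  let H := Ud *m V *m Md *m N in
  spectral_radius H <= Num.min (spectral_radius (Ud *m V)) (spectral_radius (Md *m N))
  /\ Num.min (spectral_radius (Ud *m V)) (spectral_radius (Md *m N)) < 1.
Proof.
move=> [A0 _] hA [Ad0 _] hM hU _ _ H.
have [dM [eM cM bM]] := split_d A0 hA Ad0 hM.
have [dU [eU cU bU]] := split_d A0 hA Ad0 hU.
have [sE iE] := MP_proj hA.
have eH : H = Ud *m V *m (Md *m N) by rewrite /H !mulmxA.
rewrite eH eU eM.
exact: final sE iE cU cM bU bM.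
Qed.
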